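(* Let the sequence $\{(z_n,x_n,w_n,y_n,\tau_n)\}$ be generated by the P-GRPDA iteration described in the context, where the parameters $\psi,\mu,\mu'$ satisfy \begin{equation*} 0<3\mu'<\mu<\frac{\psi}{2}+\frac{\psi(1+\psi-\psi^2)}{2(\psi+1)},\qquad \psi\in(1,1+\sqrt{3}). \end{equation*} Then $\{(x_n,y_n)\}$ converges to a solution of the saddle point problem $\min_{x\in\mathbb{X}}\max_{y\in\mathbb{Y}} \mathbb{L}(x,y)=f(x)+h(x)+\langle Kx,y\rangle-g^*(y)$.
   Context: Let $\mathbb{X},\mathbb{Y}$ be finite-dimensional real Hilbert spaces, $K:\mathbb{X}\to\mathbb{Y}$ a linear operator with adjoint $K^*$, $f:\mathbb{X}\to(-\infty,\infty]$ and $g:\mathbb{Y}\to(-\infty,\infty]$ proper, convex, lower semicontinuous, with $g^*$ the Legendre–Fenchel conjugate of $g$, and $h:\mathbb{X}\to\mathbb{R}$ convex and differentiable with $\bar L$-Lipschitz continuous gradient. Assume the set of solutions of the saddle point problem $\min_x\max_y f(x)+h(x)+\langle Kx,y\rangle-g^*(y)$ is nonempty, that $0\in\operatorname{ri}\big(K(\operatorname{dom} f)-\operatorname{dom} g\big)$, and that the proximal operators of $f$ and $g$ can be evaluated efficiently. The P-GRPDA iteration: choose $x_0\in\mathbb{X}$, $y_0\in\mathbb{Y}$, $z_0=x_0$, $\beta>0$, $\tau_0>0$, and for $n\ge1$ compute $z_n=\frac{\psi-1}{\psi}x_{n-1}+\frac1\psi z_{n-1}$, $x_n=\operatorname{prox}_{\tau_{n-1}f}\big(z_n-\tau_{n-1}K^*y_{n-1}-\tau_{n-1}\nabla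 h(x_{n-1})\big)$, $\tau_n=\min\Big\{\tau_{n-1},\ \frac{\mu\|x_n-x_{n-1}\|}{\sqrt\beta\,\|Kx_n-Kx_{n-1}\|},\ \frac{\mu'\|x_n-x_{n-1}\|}{\|\nabla h(x_n)-\nabla h(x_{n-1})\|}\Big\}$ (with conventions $1/0=\infty$ and $0/0=\infty$), $\sigma_n=\beta\tau_n$, $w_n=\operatorname{prox}_{\frac{1}{\sigma_n}g}\big(\frac{y_{n-1}}{\sigma_n}+Kx_n\big)$, $y_n=y_{n-1}+\sigma_n(Kx_n-w_n)$ (equivalently $y_n=\operatorname{prox}_{\sigma_n g^*}(y_{n-1}+\sigma_nKx_n)$). *)

(* Defs.v *)
From HB Require Import structures.
From mathcomp Require Import all_boot all_order all_algebra.
From mathcomp Require Import all_classical all_reals all_analysis.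
Set Implicit Arguments. Unset Strict Implicit. Unset Printing Implicit Defensive.
Import Order.TTheory GRing.Theory Num.Theory.
Import numFieldNormedType.Exports.
Local Open Scope ring_scope.
Local Open Scope classical_set_scope.

(* The finite-dimensional real Hilbert space of dimension n is modelled as
   column vectors 'cV[R]_n with the standard Euclidean inner product. *)
Definition ip (R : realType) (n : nat) (u v : 'cV[R]_n) : R :=
  \sum_(i < n) u i 0 * v i 0.

Definition nrm (R : realType) (n : nat) (u : 'cV[R]_n) : R :=
  Num.sqrt (ip u u).

Definition econvex (R : realType) (n : nat) (f : 'cV[R]_n -> \bar R) : Prop :=
  forall (x y : 'cV[R]_n) (t : R), 0 < t -> t < 1 ->
    let z := (t *: x + (1 - t) *: y)%R in (f z <= t%:E * f x + (1 - t)%:E * f y)%E.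

Definition eproper (R : realType) (n : nat) (f : 'cV[R]_n -> \bar R) : Prop :=
  (forall x, f x <> -oo%E) /\ (exists x, f x <> +oo%E).

(* Lower semicontinuity = (sequential) closedness of the epigraph. *)
Definition elsc (R : realType) (n : nat) (f : 'cV[R]_n -> \bar R) : Prop :=
  forall (u : nat -> 'cV[R]_n) (a : nat -> R) (x : 'cV[R]_n) (al : R),
    (fun k => nrm (u k - x)) @ \oo --> (0 : R) ->
    a @ \oo --> al ->
    (forall k, (f (u k) <= (a k)%:E)%E) -> (f x <= al%:E)%E.

Definition edom (R : realType) (n : nat) (f : 'cV[R]_n -> \bar R) : set 'cV[R]_n :=
  [set x | (f x < +oo)%E].

Definition conj_fun (R : realType) (n : nat) (g : 'cV[R]_n -> \bar R)
  (y : 'cV[R]_n) : \bar R :=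
  ereal_sup [set ((ip v y)%:E - g v)%E | v in [set: 'cV[R]_n]].

Definition aff_hull (R : realType) (n : nat) (S : set 'cV[R]_n) : set 'cV[R]_n :=
  [set x | exists (k : nat) (p : 'I_k -> 'cV[R]_n) (c : 'I_k -> R),
      (forall i, S (p i)) /\ \sum_(i < k) c i = 1 /\ x = \sum_(i < k) c i *: p i].

Definition rel_int (R : realType) (n : nat) (S : set 'cV[R]_n) : set 'cV[R]_n :=
  [set x | S x /\ exists2 e : R, 0 < e &
      forall z, aff_hull S z -> nrm (z - x) < e -> S z].

Definition is_prox (R : realType) (n : nat) (t : R) (f : 'cV[R]_n -> \bar R)
  (v p : 'cV[R]_n) : Prop :=
  forall u, (t%:E * f p + (nrm (p - v) ^+ 2 / 2)%:E
             <= t%:E * f u + (nrm (u - v) ^+ 2 / 2)%:E)%E.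

(* a / b with the conventions 1/0 = oo and 0/0 = oo *)
Definition divinf (R : realType) (a b : R) : \bar R :=
  if b == 0 then +oo%E else (a / b)%:E.

Definition lagr (R : realType) (n m : nat) (f : 'cV[R]_n -> \bar R)
  (h : 'cV[R]_n -> R) (K : 'M[R]_(m, n)) (g : 'cV[R]_m -> \bar R)
  (x : 'cV[R]_n) (y : 'cV[R]_m) : \bar R :=
  (f x + (h x + ip (K *m x) y)%:E - conj_fun g y)%E.

Definition saddle_point (R : realType) (n m : nat) (f : 'cV[R]_n -> \bar R)
  (h : 'cV[R]_n -> R) (K : 'M[R]_(m, n)) (g : 'cV[R]_m -> \bar R)
  (xs : 'cV[R]_n) (ys : 'cV[R]_m) : Prop :=
  (f xs < +oo)%E /\ (conj_fun g ys < +oo)%E /\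
  forall x y, (lagr f h K g xs y <= lagr f h K g xs ys)%E /\
              (lagr f h K g xs ys <= lagr f h K g x ys)%E.

Definition is_gradient (R : realType) (n : nat) (h : 'cV[R]_n -> R)
  (gh : 'cV[R]_n -> 'cV[R]_n) : Prop :=
  forall x (eps : R), 0 < eps -> exists2 del : R, 0 < del &
    forall d, nrm d < del -> `|h (x + d) - h x - ip (gh x) d| <= eps * nrm d.

Definition rconvex (R : realType) (n : nat) (h : 'cV[R]_n -> R) : Prop :=
  forall (x y : 'cV[R]_n) (t : R), 0 <= t -> t <= 1 ->
    h (t *: x + (1 - t) *: y) <= t * h x + (1 - t) * h y.

(* Main.v *)
Require Import Defs.
From HB Require Import structures.
From mathcomp Require Import all_boot all_order all_algebra.
From mathcomp Require Import all_classical all_reals all_analysis.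
Import Order.TTheory GRing.Theory Num.Theory.
Import numFieldNormedType.Exports.
Local Open Scope ring_scope.
Local Open Scope classical_set_scope.
From mathcomp Require Import ring lra.
Set Implicit Arguments. Unset Strict Implicit. Unset Printing Implicit Defensive.


Section IP.
Variable R : realType.

Lemma ipE n (u v : 'cV[R]_n) : ip u v = (u^T *m v) 0 0.
Proof. by rewrite /ip !mxE; apply: eq_bigr => i _; rewrite !mxE. Qed.

Lemma ipC n (u v : 'cV[R]_n) : ip u v = ip v u.
Proof. by rewrite /ip; apply: eq_bigr => i _; rewrite mulrC. Qed.

Lemma ipDl n (u v w : 'cV[R]_n) : ip (u + v) w = ip u w + ip v w.
Proof. by rewrite !ipE linearD /= mulmxDl mxE. Qed.

Lemma ipDr n (u v w : 'cV[R]_n) : ip w (u + v) = ip w u + ip w v.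
Proof. by rewrite !(ipC w) ipDl. Qed.

Lemma ipZl n a (u w : 'cV[R]_n) : ip (a *: u) w = a * ip u w.
Proof. by rewrite !ipE linearZ /= -scalemxAl mxE. Qed.

Lemma ipZr n a (u w : 'cV[R]_n) : ip w (a *: u) = a * ip w u.
Proof. by rewrite !(ipC w) ipZl. Qed.

Lemma ipNl n (u w : 'cV[R]_n) : ip (- u) w = - ip u w.
Proof. by rewrite -scaleN1r ipZl mulN1r. Qed.

Lemma ipNr n (u w : 'cV[R]_n) : ip w (- u) = - ip w u.
Proof. by rewrite !(ipC w) ipNl. Qed.

Lemma ipBl n (u v w : 'cV[R]_n) : ip (u - v) w = ip u w - ip v w.
Proof. by rewrite ipDl ipNl. Qed.

Lemma ipBr n (u v w : 'cV[R]_n) : ip w (u - v) = ip w u - ip w v.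
Proof. by rewrite ipDr ipNr. Qed.

Lemma ip0l n (w : 'cV[R]_n) : ip 0 w = 0.
Proof. by rewrite /ip big1 // => i _; rewrite mxE mul0r. Qed.

Lemma ip0r n (w : 'cV[R]_n) : ip w 0 = 0.
Proof. by rewrite ipC ip0l. Qed.

Lemma ip_ge0 n (u : 'cV[R]_n) : 0 <= ip u u.
Proof. by rewrite /ip sumr_ge0 // => i _; rewrite -expr2 sqr_ge0. Qed.

Lemma ip_eq0 n (u : 'cV[R]_n) : ip u u = 0 -> u = 0.
Proof.
move=> /eqP; rewrite /ip psumr_eq0 => [/allP H|i _]; last by rewrite -expr2 sqr_ge0.
apply/matrixP => i j; rewrite (ord1 j) mxE.
have /H : i \in index_enum 'I_n by rewrite mem_index_enum.
by rewrite /= -expr2 sqrf_eq0 => /eqP.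
Qed.

Lemma ip_tr n m (K : 'M[R]_(m, n)) (y : 'cV[R]_m) (x : 'cV[R]_n) :
  ip (K^T *m y) x = ip y (K *m x).
Proof. by rewrite !ipE trmx_mul trmxK mulmxA. Qed.

Lemma nrm_sq n (u : 'cV[R]_n) : nrm u ^+ 2 = ip u u.
Proof. by rewrite /nrm sqr_sqrtr // ip_ge0. Qed.

Lemma nrm_ge0 n (u : 'cV[R]_n) : 0 <= nrm u.
Proof. exact: sqrtr_ge0. Qed.

Lemma young n (u v : 'cV[R]_n) a : 0 < a ->
  2 * ip u v <= a * ip u u + a^-1 * ip v v.
Proof.
move=> a0; have := ip_ge0 (a *: u - v).
rewrite !ipBl !ipBr !ipZl !ipZr (ipC v u) => H.
have : 0 <= a^-1 * (a * (a * ip u u) - a * ip u v - (a * ip u v - ip v v)).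
  by rewrite mulr_ge0 // invr_ge0 ltW.
have ai : a^-1 * a = 1 by rewrite mulVf // gt_eqF.
set P := ip u u; set Q := ip u v; set S := ip v v.
have -> : a^-1 * (a * (a * P) - a * Q - (a * Q - S)) = (a^-1 * a) * (a * P) - 2 * ((a^-1 * a) * Q) + a^-1 * S by ring.
rewrite ai !mul1r; lra.
Qed.

Lemma cs n (u v : 'cV[R]_n) : `|ip u v| <= nrm u * nrm v.
Proof.
have [u0|] := eqVneq (nrm u) 0.
  have : ip u u = 0 by rewrite -nrm_sq u0 expr0n.
  by move/ip_eq0 => ->; rewrite ip0l normr0 mulr_ge0 // nrm_ge0.
have [v0|] := eqVneq (nrm v) 0.
  have : ip v v = 0 by rewrite -nrm_sq v0 expr0n.
  by move/ip_eq0 => ->; rewrite ip0r normr0 mulr_ge0 // nrm_ge0.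
move=> nv nu.
have pu : 0 < nrm u by rewrite lt0r nu nrm_ge0.
have pv : 0 < nrm v by rewrite lt0r nv nrm_ge0.
set a := nrm v / nrm u.
have a0 : 0 < a by rewrite divr_gt0.
have H1 := young u v a0.
have H2 := young u (- v) a0.
rewrite ipNr ipNl ipNr opprK -!nrm_sq in H2.
rewrite -!nrm_sq in H1.
have E : a * nrm u ^+ 2 + a^-1 * nrm v ^+ 2 = 2 * (nrm u * nrm v).
  rewrite /a invf_div; field; by rewrite nu nv.
rewrite E in H1 H2.
rewrite ler_norml; apply/andP; split; lra.
Qed.

End IP.

Section S.
Variable R : realType.

Lemma cs2 n (u v : 'cV[R]_n) : ip u v ^+ 2 <= ip u u * ip v v.
Proof.
rewrite -!nrm_sq -exprMn -real_normK ?num_real //.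
by rewrite lerXn2r ?nnegrE ?mulr_ge0 ?nrm_ge0 ?cs.
Qed.

Lemma frob n m (K : 'M[R]_(m, n)) : exists2 C, 0 <= C &
  forall v, ip (K *m v) (K *m v) <= C * ip v v.
Proof.
exists (\sum_(i < m) ip (row i K)^T (row i K)^T).
  by apply: sumr_ge0 => i _; exact: ip_ge0.
move=> v; rewrite mulr_suml /ip; apply: ler_sum => i _.
have -> : (K *m v) i 0 * (K *m v) i 0 = ip (row i K)^T v ^+ 2.
  rewrite expr2; congr (_ * _); rewrite mxE /ip; apply: eq_bigr => j _;
  by rewrite !mxE.
exact: cs2.
Qed.

Lemma sq_le_abs (a : R) : `|a| <= 1 + a ^+ 2.
Proof.
have := sqr_ge0 (`|a| - 1); have := normr_ge0 a.
rewrite -(real_normK (num_real a)); set b := `|a|; nra.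
Qed.

Lemma coord_le n (u : 'cV[R]_n) i : u i 0 ^+ 2 <= ip u u.
Proof.
rewrite /ip (bigD1 i) //= expr2 lerDl; apply: sumr_ge0 => j _.
by rewrite -expr2 sqr_ge0.
Qed.

Lemma BW n (u : nat -> 'cV[R]_n) B : (forall k, ip (u k) (u k) <= B) ->
  exists xb, forall e, 0 < e -> forall N, exists2 k, (N <= k)%N &
     ip (u k - xb) (u k - xb) < e.
Proof.
move=> HB.
pose S := [set v : 'rV[R]_n | forall i, `[(- (1 + B)), 1 + B]%classic (v ord0 i)].
have cS : compact S.
  apply: (@rV_compact _ n (fun=> `[(- (1 + B)), 1 + B]%classic)) => i; exact: segment_compact.
pose F := (fun k => (u k)^T) @ \oo.
have PF : ProperFilter F by exact: fmap_proper_filter.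
have FS : F S.
  exists 0%N => // k _ i /=; rewrite in_itv /= -ler_norml mxE.
  apply: le_trans (sq_le_abs _) _; rewrite lerD2l.
  exact: le_trans (coord_le _ _) (HB k).
have [v [_ cv]] := cS F PF FS.
exists v^T => e e0 N.
pose e' := Num.min 1 (e / (n%:R + 1)).
have e'0 : 0 < e' by rewrite lt_min ltr01 divr_gt0 // ltr_wpDl.
have FN : F [set (u k)^T | k in [set k | (N <= k)%N]].
  by exists N => // k kN; exists k.
have [_ [[k kN <-] /= Hb]] := cv _ (ball v e') FN (@nbhsx_ballx R _ v e' e'0).
exists k => //.
have Hc : forall i, (u k - v^T) i 0 ^+ 2 <= e'.
  move=> i; have [_ Hb'] := Hb; have := Hb' ord0 i; rewrite /ball /= !mxE => /ltW H.
  move: H; rewrite distrC => H.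
  have H1 : `|u k i 0 - v ord0 i| <= 1.
    by apply: (le_trans H); rewrite ge_min lexx.
  rewrite -real_normK ?num_real // expr2.
  apply: le_trans (ler_pM _ _ H1 H) _; rewrite ?normr_ge0 // mul1r.
  by [].
rewrite /ip. apply: (@le_lt_trans _ _ (\sum_(i < n) e')).
  by apply: ler_sum => i _; rewrite -expr2; exact: Hc.
rewrite sumr_const card_ord -mulr_natr.
apply: (@le_lt_trans _ _ (e / (n%:R + 1) * n%:R)).
  by rewrite ler_wpM2r // ge_min lexx orbT.
rewrite mulrAC ltr_pdivrMr ?ltr_wpDl // ltr_pM2l //; lra.
Qed.

End S.

Section CV.
Variable R : realType.

Definition rcv (a : nat -> R) (l : R) := forall e, 0 < e ->
  exists N, forall k, (N <= k)%N -> `|a k - l| < e.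

Definition sq n (u : 'cV[R]_n) := ip u u.

Definition vcv n (u : nat -> 'cV[R]_n) (l : 'cV[R]_n) :=
  rcv (fun k => sq (u k - l)) 0.

Lemma rcv_cvg a l : rcv a l -> a @ \oo --> l.
Proof.
move=> H; apply/cvgrPdist_lt => e e0; have [N HN] := H e e0.
by exists N => // k /HN; rewrite distrC.
Qed.

Lemma nrm_lt n (u : 'cV[R]_n) e : 0 < e -> sq u < e ^+ 2 -> nrm u < e.
Proof.
move=> e0 H; rewrite ltNge; apply/negP => He.
have : e ^+ 2 <= nrm u ^+ 2 by rewrite lerXn2r // ?nnegrE ?nrm_ge0 ?ltW.
by rewrite nrm_sq; apply/negP; rewrite -ltNge.
Qed.

Lemma rcv_nrm n (u : nat -> 'cV[R]_n) :
  rcv (fun k => sq (u k)) 0 -> rcv (fun k => nrm (u k)) 0.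
Proof.
move=> H e e0; have [N HN] := H (e ^+ 2) (exprn_gt0 _ e0).
exists N => k /HN; rewrite !subr0 ger0_norm ?ip_ge0 // ger0_norm ?nrm_ge0 //.
exact: nrm_lt.
Qed.

Lemma vcv_nrm n (u : nat -> 'cV[R]_n) l :
  vcv u l -> (fun k => nrm (u k - l)) @ \oo --> (0 : R).
Proof. by move=> /rcv_nrm; exact: rcv_cvg. Qed.

Lemma rcv0_le (a b : nat -> R) N0 : (forall k, (N0 <= k)%N -> `|b k| <= a k) ->
  rcv a 0 -> rcv b 0.
Proof.
move=> Hab H e e0; have [N HN] := H e e0; exists (maxn N N0) => k.
rewrite geq_max => /andP[kN kN0]; rewrite subr0.
apply: le_lt_trans (Hab _ kN0) _; have := HN _ kN; rewrite subr0.
by apply: le_lt_trans; exact: ler_norm.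
Qed.

Lemma rcvD a b la lb : rcv a la -> rcv b lb -> rcv (fun k => a k + b k) (la + lb).
Proof.
move=> Ha Hb e e0; have e20 : 0 < e / 2 by rewrite divr_gt0.
have [N1 H1] := Ha _ e20; have [N2 H2] := Hb _ e20.
exists (maxn N1 N2) => k; rewrite geq_max => /andP[k1 k2].
have := H1 _ k1; have := H2 _ k2.
have -> : a k + b k - (la + lb) = (a k - la) + (b k - lb) by ring.
move=> h1 h2; apply: le_lt_trans (ler_normD _ _) _; lra.
Qed.

Lemma rcvZ c a la : rcv a la -> rcv (fun k => c * a k) (c * la).
Proof.
move=> Ha e e0; have e1 : 0 < e / (`|c| + 1) by rewrite divr_gt0 // ltr_wpDl.
have [N HN] := Ha _ e1; exists N => k /HN H.
rewrite -mulrBr normrM; apply: (@le_lt_trans _ _ (`|c| * (e / (`|c| + 1)))).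
  by rewrite ler_wpM2l // ltW.
have c1 : 0 < `|c| + 1 by rewrite ltr_wpDl.
apply: (@lt_le_trans _ _ ((`|c| + 1) * (e / (`|c| + 1)))).
  by rewrite ltr_pM2r ?ltrDl // divr_gt0.
by rewrite mulrC divfK ?gt_eqF.
Qed.

Lemma rcv_const c : rcv (fun => c) c.
Proof. by move=> e e0; exists 0%N => k _; rewrite subrr normr0. Qed.

Lemma rcvN a la : rcv a la -> rcv (fun k => - a k) (- la).
Proof.
move=> H; have := rcvZ (-1) H; rewrite mulN1r.
by move=> H2 e e0; have [N HN] := H2 e e0; exists N => k /HN; rewrite mulN1r.
Qed.

Lemma rcv_ext a b l : (forall k, a k = b k) -> rcv a l -> rcv b l.
Proof. by move=> E H e e0; have [N HN] := H e e0; exists N => k; rewrite -E; exact: HN. Qed.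

Lemma rcv_shift a l N0 : rcv a l -> rcv (fun k => a (k + N0)%N) l.
Proof. by move=> H e e0; have [N HN] := H e e0; exists N => k kN; apply: HN; rewrite (leq_trans kN) // leq_addr. Qed.

Lemma rcvM0 a b : rcv a 0 -> rcv b 0 -> rcv (fun k => a k * b k) 0.
Proof.
move=> Ha Hb e e0; have [N1 H1] := Ha _ e0; have [N2 H2] := Hb _ ltr01.
exists (maxn N1 N2) => k; rewrite geq_max => /andP[k1 k2].
have := H1 _ k1; have := H2 _ k2; rewrite !subr0 normrM => h2 h1.
have := normr_ge0 (a k); have := normr_ge0 (b k); nra.
Qed.

Lemma sq_ge0 n (u : 'cV[R]_n) : 0 <= sq u.
Proof. exact: ip_ge0. Qed.

Lemma sqD_le n (u v : 'cV[R]_n) : sq (u + v) <= 2 * sq u + 2 * sq v.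
Proof.
rewrite /sq ipDl !ipDr (ipC v u).
have := young u v ltr01; rewrite invr1 !mul1r; lra.
Qed.

Lemma sqN n (u : 'cV[R]_n) : sq (- u) = sq u.
Proof. by rewrite /sq ipNl ipNr opprK. Qed.

Lemma sqB n (u v : 'cV[R]_n) : sq (u - v) = sq (v - u).
Proof. by rewrite -sqN opprB. Qed.

Lemma rcv_sub a l (phi : nat -> nat) : (forall k, (k <= phi k)%N) ->
  rcv a l -> rcv (fun k => a (phi k)) l.
Proof. by move=> Hp H e e0; have [N HN] := H e e0; exists N => k kN; apply: HN; exact: leq_trans kN (Hp k). Qed.

Lemma vcv_le n m (u : nat -> 'cV[R]_n) l (v : nat -> 'cV[R]_m) l' C :
  (forall k, sq (v k - l') <= C * sq (u k - l)) -> vcv u l -> vcv v l'.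
Proof.
move=> Hle H; have := rcvZ C H; rewrite mulr0 => H2.
apply: (rcv0_le (N0 := 0%N)) H2 => k _; rewrite ger0_norm ?sq_ge0 //.
Qed.

Lemma vcvD n (u v : nat -> 'cV[R]_n) l m : vcv u l -> vcv v m ->
  vcv (fun k => u k + v k) (l + m).
Proof.
move=> Hu Hv; have := rcvD (rcvZ 2 Hu) (rcvZ 2 Hv); rewrite !mulr0 addr0 => H.
apply: (rcv0_le (N0 := 0%N)) H => k _; rewrite ger0_norm ?sq_ge0 //.
have -> : u k + v k - (l + m) = (u k - l) + (v k - m).
  by rewrite opprD addrACA.
exact: sqD_le.
Qed.

Lemma vcv_const n (c : 'cV[R]_n) : vcv (fun => c) c.
Proof.
by move=> e e0; exists 0%N => k _; rewrite subrr /sq ip0l subrr normr0.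
Qed.

Lemma vcvN n (u : nat -> 'cV[R]_n) l : vcv u l -> vcv (fun k => - u k) (- l).
Proof.
move=> H; apply: (@vcv_le n n u l _ _ 1 _ H) => k.
by rewrite mul1r -opprD sqN.
Qed.

Lemma vcvB n (u v : nat -> 'cV[R]_n) l m : vcv u l -> vcv v m ->
  vcv (fun k => u k - v k) (l - m).
Proof. by move=> Hu Hv; apply: vcvD Hu (vcvN Hv). Qed.

Lemma vcv_sq0 n (u : nat -> 'cV[R]_n) l : vcv u l <-> rcv (fun k => sq (u k - l)) 0.
Proof. by []. Qed.

Lemma vcv_close n (u v : nat -> 'cV[R]_n) l :
  vcv u l -> rcv (fun k => sq (v k - u k)) 0 -> vcv v l.
Proof.
move=> Hu Hd; have := rcvD (rcvZ 2 Hd) (rcvZ 2 Hu); rewrite !mulr0 addr0 => H.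
apply: (rcv0_le (N0 := 0%N)) H => k _; rewrite ger0_norm ?sq_ge0 //.
have -> : v k - l = (v k - u k) + (u k - l) by rewrite addrA subrK.
exact: sqD_le.
Qed.

Lemma rcvB0 a l : rcv (fun k => a k - l) 0 -> rcv a l.
Proof. by move=> H e e0; have [N HN] := H e e0; exists N => k /HN; rewrite subr0. Qed.

Lemma rcv0B a l : rcv a l -> rcv (fun k => a k - l) 0.
Proof. by move=> H e e0; have [N HN] := H e e0; exists N => k /HN; rewrite subr0. Qed.

Lemma ip_cont n (u v : nat -> 'cV[R]_n) l m : vcv u l -> vcv v m ->
  rcv (fun k => ip (u k) (v k)) (ip l m).
Proof.
move=> Hu Hv.
have Nu := rcv_nrm Hu; have Nv := rcv_nrm Hv.
have H := rcvD (rcvD (rcvM0 Nu Nv) (rcvZ (nrm m) Nu)) (rcvZ (nrm l) Nv).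
rewrite !mulr0 !addr0 in H.
apply: rcvB0; apply: (rcv0_le (N0 := 0%N)) H => k _.
have -> : ip (u k) (v k) - ip l m = ip (u k - l) (v k - m) + ip (u k - l) m + ip l (v k - m).
  rewrite !ipBl !ipBr; ring.
apply: le_trans (ler_normD _ _) _; apply: lerD; last first.
  by apply: le_trans (cs _ _) _; rewrite lexx.
apply: le_trans (ler_normD _ _) _; apply: lerD; apply: le_trans (cs _ _) _.
  by rewrite lexx.
by rewrite mulrC lexx.
Qed.

End CV.

Section Opt.
Variable R : realType.

Lemma small_le (D Q : R) : 0 <= Q -> (forall s, 0 < s -> s < 1 -> D <= s * Q) -> D <= 0.
Proof.
move=> Q0 H; rewrite leNgt; apply/negP => D0.
pose s := Num.min (2^-1) (D / (2 * (Q + 1))).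
have s0 : 0 < s by rewrite lt_min invr_gt0 ltr0n /= divr_gt0 // mulr_gt0 // ltr_wpDl.
have s1 : s < 1 by rewrite gt_min; apply/orP; left; rewrite invf_lt1 // ltr1n.
have := H s s0 s1.
have : s <= D / (2 * (Q + 1)) by rewrite ge_min lexx orbT.
have Q1 : 0 < Q + 1 by rewrite ltr_wpDl.
have E : D / (2 * (Q + 1)) * (2 * (Q + 1)) = D by rewrite divfK // gt_eqF // mulr_gt0.
move=> hs hD.
have : s * Q <= D / (2 * (Q + 1)) * Q by rewrite ler_wpM2r.
set a := D / (2 * (Q + 1)) in E hs *.
nra.
Qed.

Lemma fin_of (x : \bar R) : (x <> -oo)%E -> (x <> +oo)%E -> exists r, x = r%:E.
Proof. by case: x => [r | |] // _ _; exists r. Qed.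

Lemma prox_fin n (t : R) (f : 'cV[R]_n -> \bar R) v p : 0 < t -> eproper f ->
  is_prox t f v p -> exists fp : R, f p = fp%:E.
Proof.
move=> t0 [Hm [x0 Hx0]] Hp.
apply: fin_of => // Hpo; have := Hp x0; rewrite Hpo.
have [c ->] := fin_of (Hm x0) Hx0.
by rewrite mulry gtr0_sg // mul1e addye // -!EFinM -EFinD leye_eq.
Qed.

Lemma sq_expand n (a b : 'cV[R]_n) (s : R) :
  ip (a + s *: b) (a + s *: b) = ip a a + 2 * s * ip a b + s ^+ 2 * ip b b.
Proof.
have E : ip (a + s *: b) (a + s *: b) = ip a (a + s *: b) + ip (s *: b) (a + s *: b) by exact: ipDl.
rewrite E !ipDr !ipZl !ipZr (ipC b a); ring.
Qed.

Lemma prox_vi n (t : R) (f : 'cV[R]_n -> \bar R) v p : 0 < t -> eproper f ->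
  econvex f -> is_prox t f v p ->
  exists fp : R, f p = fp%:E /\
    forall u (fu : R), f u = fu%:E -> ip (v - p) (u - p) <= t * (fu - fp).
Proof.
move=> t0 Pf Cf Hp; have [fp Efp] := prox_fin t0 Pf Hp.
exists fp; split => // u fu Efu.
rewrite -subr_le0; apply: (@small_le _ (2^-1 * sq (u - p))).
  by rewrite mulr_ge0 ?sq_ge0 // invr_ge0.
move=> s s0 s1.
have := Cf u p s s0 s1; rewrite Efu Efp -!EFinM -EFinD /=.
set us := s *: u + (1 - s) *: p => Hc.
have [c Ec] : exists c, f us = c%:E.
  apply: fin_of (Pf.1 _) _ => E; move: Hc; rewrite E leye_eq.
  by [].
rewrite Ec lee_fin in Hc.
have := Hp us; rewrite Efp Ec -!EFinM -!EFinD lee_fin !nrm_sq.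
have -> : us - v = (p - v) + s *: (u - p).
  by apply/matrixP => i j; rewrite !mxE; ring.
rewrite sq_expand => Hq.
have Hvp : ip (v - p) (u - p) = - ip (p - v) (u - p).
  by rewrite -ipNl opprB.
rewrite Hvp /sq.
have Htc : t * c <= t * (s * fu + (1 - s) * fp) by rewrite ler_wpM2l // ltW.
rewrite -(ler_pM2l s0).
move: Hq Htc; set X := ip (p - v) (u - p); set Q := ip (u - p) (u - p);
  set P := ip (p - v) (p - v) => Hq Htc.
lra.
Qed.

Lemma dual_vi m (g : 'cV[R]_m -> \bar R) (sig : R) y0 kx w y1 : 0 < sig ->
  eproper g -> econvex g ->
  is_prox sig^-1 g (sig^-1 *: y0 + kx) w -> y1 = y0 + sig *: (kx - w) ->
  exists Gy : R, conj_fun g y1 = Gy%:E /\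
    forall y, ((Gy + ip w (y - y1))%:E <= conj_fun g y)%E.
Proof.
move=> s0 Pg Cg Hp Ey.
have si0 : 0 < sig^-1 by rewrite invr_gt0.
have [gw [Egw Hv]] := prox_vi si0 Pg Cg Hp.
have E1 : sig^-1 *: y0 + kx - w = sig^-1 *: y1.
  rewrite Ey scalerDr scalerA mulVf ?gt_eqF // scale1r; by rewrite addrA.
have Hv' : forall v gv, g v = gv%:E -> ip v y1 - gv <= ip w y1 - gw.
  move=> v gv /Hv; rewrite E1 ipZl (ipC y1) ipBl.
  rewrite ler_pM2l //; lra.
exists (ip w y1 - gw); split.
  apply/le_anti/andP; split.
    apply: ge_ereal_sup => _ [v _ <-].
    case Egv: (g v) => [gv | | ].
    - by rewrite -EFinB lee_fin; exact: Hv'.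
    - by rewrite /= leNye.
    - by have := Pg.1 v; rewrite Egv.
  by apply: ereal_sup_ubound; exists w => //; rewrite Egw.
move=> y; apply: ereal_sup_ubound; exists w => //.
by rewrite Egw -EFinB ipBr; congr (_%:E); ring.
Qed.

Lemma conj_nmo m (g : 'cV[R]_m -> \bar R) y : eproper g -> conj_fun g y <> -oo%E.
Proof.
move=> [Hm [x0 Hx0]]; have [c Ec] := fin_of (Hm x0) Hx0.
have : ((ip x0 y - c)%:E <= conj_fun g y)%E.
  by apply: ereal_sup_ubound; exists x0 => //; rewrite Ec.
by move=> H E; rewrite E leeNy_eq in H.
Qed.

Lemma rcv_le a b (la lb : R) : rcv a la -> rcv b lb -> (forall k, a k <= b k) -> la <= lb.
Proof.
move=> Ha Hb Hab; rewrite leNgt; apply/negP => H.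
have e0 : 0 < (la - lb) / 2 by rewrite divr_gt0 // subr_gt0.
have [N1 H1] := Ha _ e0; have [N2 H2] := Hb _ e0.
have := H1 (maxn N1 N2) (leq_maxl _ _); have := H2 (maxn N1 N2) (leq_maxr _ _).
have := Hab (maxn N1 N2).
set A := a _; set B := b _; rewrite !ltr_norml => hab /andP[h1 h2] /andP[h3 h4].
lra.
Qed.

Lemma conj_lsc m (g : 'cV[R]_m -> \bar R) (u : nat -> 'cV[R]_m) yb (a : nat -> R) al :
  eproper g -> vcv u yb -> rcv a al -> (forall k, (conj_fun g (u k) <= (a k)%:E)%E) ->
  (conj_fun g yb <= al%:E)%E.
Proof.
move=> Pg Hu Ha Hk; apply: ge_ereal_sup => _ [v _ <-].
case Egv: (g v) => [gv | | ].
- rewrite -EFinB lee_fin.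
  have Hb : rcv (fun k => ip v (u k) - gv) (ip v yb - gv).
    by apply: rcvD (ip_cont (vcv_const v) Hu) (rcv_const _).
  apply: (rcv_le Hb Ha) => k; rewrite -lee_fin EFinB.
  apply: le_trans (Hk k); apply: ereal_sup_ubound; exists v => //.
  by rewrite Egv.
- by rewrite /= leNye.
- by have := Pg.1 v; rewrite Egv.
Qed.

End Opt.

Section More.
Variable R : realType.

Lemma nrmZ n (s : R) (d : 'cV[R]_n) : nrm (s *: d) = `|s| * nrm d.
Proof.
by rewrite /nrm ipZl ipZr mulrA -expr2 sqrtrM ?sqr_ge0 // sqrtr_sqr.
Qed.

Lemma grad_ineq n (h : 'cV[R]_n -> R) gh : rconvex h -> is_gradient h gh ->
  forall x y, h y + ip (gh y) (x - y) <= h x.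
Proof.
move=> Ch Gh x y; set d := x - y.
rewrite -subr_le0; apply: (small_le (Q := nrm d)); first exact: nrm_ge0.
move=> e e0 e1; have [del del0 Hd] := Gh y e e0.
pose s := Num.min (2^-1) (del / (nrm d + 1)).
have s0 : 0 < s by rewrite lt_min invr_gt0 ltr0n /= divr_gt0 // ltr_wpDl // nrm_ge0.
have s1 : s <= 1 by rewrite ge_min; apply/orP; left; rewrite invf_le1 // ler1n.
have nd0 := nrm_ge0 d.
have Hs : nrm (s *: d) < del.
  rewrite nrmZ (ger0_norm (ltW s0)).
  have : s <= del / (nrm d + 1) by rewrite ge_min lexx orbT.
  have E : del / (nrm d + 1) * (nrm d + 1) = del by rewrite divfK // gt_eqF // ltr_wpDl.
  set a := del / (nrm d + 1) in E *; nra.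
have := Hd _ Hs; rewrite nrmZ (ger0_norm (ltW s0)) => Hn.
have E2 : ip (gh y) (s *: d) = s * ip (gh y) d by exact: ipZr.
rewrite E2 in Hn.
have Hc := Ch x y s (ltW s0) s1.
have E3 : s *: x + (1 - s) *: y = y + s *: d.
  by apply/matrixP => i j; rewrite !mxE; ring.
rewrite E3 in Hc.
move: Hc Hn; rewrite ler_norml => Hc /andP[H1 H2].
set X := ip (gh y) d in H1 H2 *; set hs := h (y + s *: d) in Hc H1 H2.
rewrite -(ler_pM2l s0); nra.
Qed.

Lemma ninc_le (u : nat -> R) N0 : (forall k, (N0 <= k)%N -> u k.+1 <= u k) ->
  forall M k, (N0 <= M)%N -> (M <= k)%N -> u k <= u M.
Proof.
move=> H M k NM; elim: k => [|k IH]; first by rewrite leqn0 => /eqP ->.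
rewrite leq_eqVlt => /orP[/eqP -> //|]; rewrite ltnS => Mk.
apply: le_trans (IH Mk); apply: H; exact: leq_trans NM Mk.
Qed.

Lemma ninc_ev (u : nat -> R) N0 lb : (forall k, (N0 <= k)%N -> u k.+1 <= u k) ->
  (forall k, lb <= u k) -> forall e, 0 < e ->
  exists M, (N0 <= M)%N /\ forall k, (M <= k)%N -> u M <= u k + e.
Proof.
move=> Hd Hb e e0.
pose E := [set - u k | k in [set k | (N0 <= k)%N]].
have hs : has_sup E.
  split; first by exists (- u N0); exists N0 => //=.
  by exists (- lb) => _ [k _ <-]; rewrite lerN2.
have [_ [M NM <-] HM] := sup_adherent e0 hs.
exists M; split => // k Mk.
have : - u k <= sup E by apply: sup_upper_bound => //; exists k => //; exact: leq_trans NM Mk.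
lra.
Qed.

Lemma quadform n (u v : 'cV[R]_n) A B C : 0 < A + B ->
  B ^+ 2 <= (A + B) * (C + B) -> 0 <= A * sq u + C * sq v + B * sq (u + v).
Proof.
move=> AB0 Hd.
have Y := young u (- B *: v) AB0.
rewrite ipZr ipZl ipZr in Y.
have E : sq (u + v) = sq u + 2 * ip u v + sq v.
  rewrite /sq ipDl !ipDr (ipC v u); ring.
rewrite E; rewrite /sq in Y *.
have Hq := ip_ge0 v; have Hp := ip_ge0 u.
set P := ip u u in Y Hp *; set Q := ip v v in Y Hq *; set X := ip u v in Y *.
have Hi : (A + B)^-1 * (- B * (- B * Q)) <= (C + B) * Q.
  have -> : (A + B)^-1 * (- B * (- B * Q)) = (B ^+ 2 / (A + B)) * Q.
    by field; rewrite gt_eqF.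
  have Q' : B ^+ 2 / (A + B) <= C + B by rewrite ler_pdivrMr // mulrC.
  by rewrite ler_wpM2r.
nra.
Qed.

End More.

Section Alg.
Variable R : realType.

Lemma core_alg (beta psi rho rho1 mu mu' c d tau0 taum : R)
  (p q r S Za1 Za2 Xa1 Yb0 Ybm Dm A1 A2 A3 X H : R)
  (Fa F0 F1 Gb G0 ha h0 k1 k2 k3 k4 k5 k6 k7 ga g1 gm1 gm0 g0x0 : R) :
  0 < beta -> 0 < tau0 -> rho * taum = tau0 ->
  beta * (2 * A1) = beta * (p + Xa1 - Za1) ->
  beta * Xa1 = beta * (c * Za2 - (c - 1) * Za1 + d * p) ->
  beta * rho * psi * (2 * A2) = beta * rho * psi * (q + r - p) ->
  2 * A3 = S + Yb0 - Ybm ->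
  A1 - tau0 * (k1 - k2) - tau0 * (ga - g1) <= tau0 * (Fa - F1) ->
  beta * rho * (psi * A2 - taum * (k3 - k4) - taum * (gm1 - gm0)) <= beta * rho * (taum * (F1 - F0)) ->
  beta * tau0 * G0 + beta * tau0 * (k5 - k6) + A3 <= beta * tau0 * Gb ->
  Fa + ha + k7 <= F0 + h0 + k5 ->
  k1 - G0 <= k7 - Gb ->
  h0 + (ga - g0x0) <= ha ->
  X = k3 - k4 - k2 + k6 ->
  H = g0x0 - g1 - gm0 + gm1 ->
  2 * beta * tau0 * X <= mu * S + beta * rho1 ^+ 2 * mu * r ->
  2 * tau0 * H <= mu' * Dm + mu' * r ->
  beta * c * Za2 + Yb0 + beta * mu' * r +
   beta * ((1 + d - rho * psi) * p + rho * psi * q + (rho * psi - rho1 ^+ 2 * mu - 2 * mu') * r)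
   + (1 - mu) * S <= beta * c * Za1 + Ybm + beta * mu' * Dm.
Proof.
move=> b0 t0 Ert EA1 EG EA2 EA3 I1 I2 I3 S1 S2 Cv EX EH YK YH.
have I1b : beta * (A1 - tau0 * (k1 - k2) - tau0 * (ga - g1)) <= beta * (tau0 * (Fa - F1)).
  by rewrite ler_wpM2l // ltW.
have bt0 : 0 <= beta * tau0 by rewrite mulr_ge0 // ltW.
have S1b : beta * tau0 * (Fa + ha + k7) <= beta * tau0 * (F0 + h0 + k5).
  by rewrite ler_wpM2l.
have S2b : beta * tau0 * (k1 - G0) <= beta * tau0 * (k7 - Gb).
  by rewrite ler_wpM2l.
have Cvb : beta * tau0 * (h0 + (ga - g0x0)) <= beta * tau0 * ha.
  by rewrite ler_wpM2l.
have YHb : beta * (2 * tau0 * H) <= beta * (mu' * Dm + mu' * r).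
  by rewrite ler_wpM2l // ltW.
have E2 : beta * rho * taum = beta * tau0 by rewrite -Ert mulrA.
rewrite EX in YK; rewrite EH in YHb.
move: I2; rewrite !mulrBr !mulrDr !mulrA E2 => I2.
lra.
Qed.
End Alg.

Section Vec.
Variable R : realType.

Lemma polar n (u v w : 'cV[R]_n) :
  2 * ip (u - v) (w - v) = sq (u - v) + sq (w - v) - sq (u - w).
Proof. rewrite /sq !ipBl !ipBr (ipC v u) (ipC w u) (ipC w v); ring. Qed.

Lemma golden n (psi : R) (X Z Z' a : 'cV[R]_n) : 1 < psi ->
  Z' = ((psi - 1) / psi) *: X + psi^-1 *: Z ->
  sq (X - a) = psi / (psi - 1) * sq (Z' - a) - (psi / (psi - 1) - 1) * sq (Z - a)
               + psi^-1 * sq (X - Z).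
Proof.
move=> p1 EZ.
have p0 : psi != 0 by rewrite gt_eqF // (lt_trans ltr01).
have p10 : psi - 1 != 0 by rewrite subr_eq0 gt_eqF.
have E1 : Z' - a = ((psi - 1) / psi) *: (X - a) + psi^-1 *: (Z - a).
  by rewrite EZ; apply/matrixP => i j; rewrite !mxE; field.
have E2 : X - Z = (X - a) - (Z - a).
  by apply/matrixP => i j; rewrite !mxE; ring.
rewrite E1 E2; set P := X - a; set Q := Z - a.
rewrite /sq !(ipDl, ipDr, ipZl, ipZr, ipNl, ipNr) (ipC a X) (ipC Z X) (ipC a Z).
field; by rewrite p0 p10.
Qed.

Lemma prox_exp n m (K : 'M[R]_(m, n)) (zz gg p u : 'cV[R]_n) (yy : 'cV[R]_m) (t : R) :
  ip (zz - t *: (K^T *m yy) - t *: gg - p) (u - p) =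
  ip (zz - p) (u - p) - t * (ip yy (K *m u) - ip yy (K *m p)) - t * (ip gg u - ip gg p).
Proof.
have -> : zz - t *: (K^T *m yy) - t *: gg - p = (zz - p) - t *: (K^T *m yy) - t *: gg.
  by apply/matrixP => i j; rewrite !mxE; ring.
by rewrite !ipBl !ipZl ip_tr mulmxBr !ipBr.
Qed.

Lemma dual_exp m (sig : R) (ym y0 kx w0 b : 'cV[R]_m) : 0 < sig ->
  y0 = ym + sig *: (kx - w0) ->
  sig * ip w0 (b - y0) = sig * (ip kx b - ip kx y0) + ip (ym - y0) (b - y0).
Proof.
move=> s0 Ey.
have E : sig *: w0 = sig *: kx + (ym - y0).
  by rewrite Ey; apply/matrixP => i j; rewrite !mxE; ring.
have E2 : sig * ip w0 (b - y0) = ip (sig *: w0) (b - y0) by rewrite ipZl.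
by rewrite E2 E (ipDl (sig *: kx)) ipZl ipBr.
Qed.

Lemma young_K n m (K : 'M[R]_(m, n)) (dy : 'cV[R]_m) (d : 'cV[R]_n)
    (beta tau0 tau1 mu : R) :
  0 < beta -> 0 < tau0 -> 0 < tau1 -> 0 < mu ->
  tau1 ^+ 2 * beta * sq (K *m d) <= mu ^+ 2 * sq d ->
  2 * beta * tau0 * ip dy (K *m d) <= mu * sq dy + beta * (tau0 / tau1) ^+ 2 * mu * sq d.
Proof.
move=> b0 t0 t1 m0 H.
have a0 : 0 < mu / (beta * tau0) by rewrite divr_gt0 // mulr_gt0.
have Y := young dy (K *m d) a0.
have bt : 0 < beta * tau0 by rewrite mulr_gt0.
have Y2 := ler_wpM2l (ltW bt) Y.
rewrite /sq.
have E1 : beta * tau0 * (mu / (beta * tau0) * ip dy dy) = mu * ip dy dy.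
  by field; rewrite !gt_eqF.
have E2 : beta * tau0 * ((mu / (beta * tau0))^-1 * ip (K *m d) (K *m d))
   = (beta * (tau0 / tau1) ^+ 2 / mu) * (tau1 ^+ 2 * beta * ip (K *m d) (K *m d)).
  by field; rewrite !gt_eqF.
rewrite mulrDr E1 E2 in Y2.
have c0 : 0 <= beta * (tau0 / tau1) ^+ 2 / mu.
  by apply: divr_ge0; [apply: mulr_ge0; [exact: ltW | exact: sqr_ge0] | exact: ltW].
have H2 := ler_wpM2l c0 H; rewrite /sq in H2.
have E3 : (beta * (tau0 / tau1) ^+ 2 / mu) * (mu ^+ 2 * ip d d) = beta * (tau0 / tau1) ^+ 2 * mu * ip d d.
  by field; rewrite !gt_eqF.
rewrite E3 in H2.
have E4 : beta * tau0 * (2 * ip dy (K *m d)) = 2 * beta * tau0 * ip dy (K *m d) by ring.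
rewrite E4 in Y2; lra.
Qed.

Lemma young_H n (dg e d0 : 'cV[R]_n) (tau0 mu' : R) :
  0 < tau0 -> 0 < mu' -> tau0 ^+ 2 * sq dg <= mu' ^+ 2 * sq d0 ->
  2 * tau0 * ip dg e <= mu' * sq d0 + mu' * sq e.
Proof.
move=> t0 m0 H.
have a0 : 0 < tau0 / mu' by rewrite divr_gt0.
have Y := ler_wpM2l (ltW t0) (young dg e a0).
have E1 : tau0 * (tau0 / mu' * ip dg dg + (tau0 / mu')^-1 * ip e e)
   = mu'^-1 * (tau0 ^+ 2 * ip dg dg) + mu' * ip e e.
  by field; rewrite !gt_eqF.
rewrite E1 in Y; rewrite /sq in H *.
have H2 : mu'^-1 * (tau0 ^+ 2 * ip dg dg) <= mu'^-1 * (mu' ^+ 2 * ip d0 d0).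
  by rewrite ler_wpM2l // invr_ge0 ltW.
have E3 : mu'^-1 * (mu' ^+ 2 * ip d0 d0) = mu' * ip d0 d0 by field; rewrite !gt_eqF.
rewrite E3 in H2; lra.
Qed.

End Vec.

Section Consts.
Variable R : realType.

Lemma consts (t mu mu' : R) : 1 < t -> 0 < 3 * mu' -> 3 * mu' < mu ->
  mu < t / 2 + t * (1 + t - t ^+ 2) / (2 * (t + 1)) ->
  [/\ 0 < (1 + t^-1 - t) + (t - mu - 2 * mu'),
      0 < ((1 + t^-1 - t) + (t - mu - 2 * mu')) * (t + (t - mu - 2 * mu'))
          - (t - mu - 2 * mu') ^+ 2
    & mu < 1].
Proof.
move=> t1 m0 mm Hmu.
have t0 : 0 < t by exact: lt_trans ltr01 t1.
have t10 : 0 < t + 1 by rewrite ltr_wpDl // ltW.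
have E : t / 2 + t * (1 + t - t ^+ 2) / (2 * (t + 1)) = t * (2 + 2 * t - t ^+ 2) / (2 * (t + 1)).
  by field; rewrite gt_eqF.
rewrite E ltr_pdivlMr ?mulr_gt0 // in Hmu.
have mu0 : 0 < mu by lra.
set s := mu + 2 * mu'.
have hs : s * (t + 1) < t * (2 + 2 * t - t ^+ 2).
  have : s < 2 * mu by rewrite /s; lra.
  rewrite -(ltr_pM2r t10) => H; lra.
have hsq : t * (t * (2 + 2 * t - t ^+ 2)) <= (t + 1) ^+ 2.
  rewrite -subr_ge0.
  have -> : (t + 1) ^+ 2 - t * (t * (2 + 2 * t - t ^+ 2)) = (t ^+ 2 - t - 1) ^+ 2 by ring.
  exact: sqr_ge0.
have E1 : (1 + t^-1 - t) + (t - mu - 2 * mu') = (t + 1 - s * t) / t.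
  by rewrite /s; field; rewrite gt_eqF.
have E2 : ((1 + t^-1 - t) + (t - mu - 2 * mu')) * (t + (t - mu - 2 * mu'))
          - (t - mu - 2 * mu') ^+ 2 = (t * (2 + 2 * t - t ^+ 2) - s * (t + 1)) / t.
  by rewrite /s; field; rewrite gt_eqF.
split.
- rewrite E1 divr_gt0 // subr_gt0.
  have H1 : s * t * (t + 1) < t * (t * (2 + 2 * t - t ^+ 2)).
    have := hs; rewrite -(ltr_pM2l t0) => H.
    by have -> : s * t * (t + 1) = t * (s * (t + 1)) by ring.
  have H2 : s * t * (t + 1) < (t + 1) * (t + 1) by rewrite -expr2; lra.
  by rewrite -(ltr_pM2r t10).
- by rewrite E2 divr_gt0 // subr_gt0.
- have h3 : t * (2 + 2 * t - t ^+ 2) < 2 * (t + 1).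
    have := sqr_ge0 (t - 4/3); have h43 : 0 < t + 2/3 by lra.
    move=> H; have := mulr_ge0 H (ltW h43).
    have -> : (t - 4 / 3) ^+ 2 * (t + 2 / 3) = t ^+ 3 - 2 * t ^+ 2 + 32/27 - 0 by field.
    move=> H2; rewrite -subr_gt0.
    have -> : 2 * (t + 1) - t * (2 + 2 * t - t ^+ 2) = t ^+ 3 - 2 * t ^+ 2 + 2 by ring.
    lra.
  have : mu * (2 * (t + 1)) < 2 * (t + 1) by lra.
  by rewrite -{2}(mul1r (2 * (t + 1))) ltr_pM2r ?mulr_gt0.
Qed.

Lemma Dq_lb n (u v : 'cV[R]_n) (t mu mu' rho rho1 eps eta : R) :
  1 < t -> 0 < mu -> 0 <= eta -> t * eta <= eps -> eta * (t + mu) <= eps ->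
  rho <= 1 -> 1 - eta <= rho -> rho1 ^+ 2 <= 1 + eta ->
  0 < (1 + t^-1 - t - eps) + (t - mu - 2 * mu' - eps) ->
  (t - mu - 2 * mu' - eps) ^+ 2 <= ((1 + t^-1 - t - eps) + (t - mu - 2 * mu' - eps))
      * ((t - 2 * eps) + (t - mu - 2 * mu' - eps)) ->
  eps * (sq u + sq v) <= (1 + t^-1 - rho * t) * sq u + rho * t * sq v
      + (rho * t - rho1 ^+ 2 * mu - 2 * mu') * sq (u + v).
Proof.
move=> t1 m0 e0 te ete r1 r2 r3 Q1 Q2.
have Q := quadform u v Q1 Q2.
have t0 : 0 < t by exact: lt_trans ltr01 t1.
have P0 := sq_ge0 u; have Q0 := sq_ge0 v; have R0 := sq_ge0 (u + v).
set P := sq u in P0 Q *; set QQ := sq v in Q0 Q *; set Rr := sq (u + v) in R0 Q *.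
have h1 : rho * t * P <= t * P by rewrite ler_wpM2r // ler_piMl // ltW.
have h2 : (1 - eta) * t * QQ <= rho * t * QQ by rewrite ler_wpM2r // ler_wpM2r // ltW.
have h3 : (1 - eta) * t * Rr <= rho * t * Rr by rewrite ler_wpM2r // ler_wpM2r // ltW.
have h4 : rho1 ^+ 2 * mu * Rr <= (1 + eta) * mu * Rr by rewrite ler_wpM2r // ler_wpM2r // ltW.
have h5 : t * eta * QQ <= eps * QQ by rewrite ler_wpM2r.
have h6 : eta * (t + mu) * Rr <= eps * Rr by rewrite ler_wpM2r.
nra.
Qed.

Lemma dec_to0 (E D : nat -> R) N : (forall k, 0 <= E k) -> (forall k, 0 <= D k) ->
  (forall k, (N <= k)%N -> E k.+1 + D k <= E k) -> rcv D 0.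
Proof.
move=> E0 D0 HE e e0.
have Hd : forall k, (N <= k)%N -> E k.+1 <= E k.
  by move=> k Nk; have := HE k Nk; have := D0 k; lra.
have e2 : 0 < e / 2 by rewrite divr_gt0.
have [M [NM HM]] := ninc_ev Hd E0 e2.
exists M => k Mk; rewrite subr0 ger0_norm //.
have h1 := HE k (leq_trans NM Mk).
have h2 := ninc_le Hd NM Mk.
have h3 := HM k.+1 (leq_trans Mk (leqnSn k)).
lra.
Qed.

Lemma rcv_bdd0 (a b : nat -> R) B : (forall j, `|b j| <= B) -> rcv a 0 ->
  rcv (fun j => b j * a j) 0.
Proof.
move=> Hb Ha.
have Ha' : rcv (fun j => `|a j|) 0.
  by move=> e e0; have [N HN] := Ha e e0; exists N => k /HN; rewrite !subr0 normr_id.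
have := rcvZ B Ha'; rewrite mulr0 => H.
apply: (rcv0_le (N0 := 0%N)) H => k _; rewrite normrM.
by rewrite ler_wpM2r.
Qed.

Lemma BWsub n (u : nat -> 'cV[R]_n) B : (forall k, sq (u k) <= B) ->
  exists xb (phi : nat -> nat), (forall j, (j <= phi j)%N) /\ vcv (fun j => u (phi j)) xb.
Proof.
move=> HB; have [xb Hx] := BW HB.
have : forall j, exists k, (j <= k)%N /\ sq (u k - xb) < (j.+1%:R)^-1.
  move=> j; have [k jk Hk] := Hx (j.+1%:R)^-1 ltac:(by rewrite invr_gt0 ltr0n) j.
  by exists k.
move=> /choice [phi Hphi]; exists xb, phi; split; first by move=> j; have [] := Hphi j.
move=> e e0.
have [J HJ] : exists J : nat, (J.+1%:R)^-1 < e.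
  exists (Num.Def.archi_bound e^-1).
  have ei : 0 < e^-1 by rewrite invr_gt0.
  have H := archi_boundP (ltW ei).
  rewrite invf_plt ?posrE ?ltr0n //.
  rewrite -addn1 natrD; lra.
exists J => j Jj; rewrite subr0 ger0_norm ?sq_ge0 //.
have [_ H] := Hphi j; apply: lt_trans H _; apply: le_lt_trans HJ.
by rewrite lef_pV2 ?posrE ?ltr0n // ler_nat.
Qed.

End Consts.

Section Div.
Variable R : realType.

Lemma divinf_le (t a b : R) : 0 <= t -> 0 <= a -> 0 <= b ->
  (t%:E <= divinf a b)%E -> t * b <= a.
Proof.
move=> t0 a0 b0; rewrite /divinf; case: eqP => [->|/eqP bn]; first by rewrite mulr0.
by rewrite lee_fin ler_pdivlMr // lt0r bn.
Qed.

Lemma divinf_ge (c a b : R) : 0 < c -> 0 <= b -> c * b <= a -> (c%:E <= divinf a b)%E.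
Proof.
move=> c0 b0 H; rewrite /divinf; case: eqP => [_|/eqP bn]; first exact: leey.
by rewrite lee_fin ler_pdivlMr // lt0r bn.
Qed.

Lemma sq_le_sq (a b : R) : 0 <= a -> a <= b -> a ^+ 2 <= b ^+ 2.
Proof. by move=> a0 ab; rewrite !expr2 ler_pM. Qed.

End Div.

Section Main.
Variables (R : realType) (n m : nat) (K : 'M[R]_(m, n))
  (f : 'cV[R]_n -> \bar R) (g : 'cV[R]_m -> \bar R)
  (h : 'cV[R]_n -> R) (gh : 'cV[R]_n -> 'cV[R]_n) (Lbar : R)
  (psi mu mu' beta : R)
  (z x : nat -> 'cV[R]_n) (w y : nat -> 'cV[R]_m) (tau : nat -> R).
Hypotheses (Pf : eproper f) (Cf : econvex f) (Lf : elsc f)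
  (Pg : eproper g) (Cg : econvex g)
  (Ch : rconvex h) (Gh : is_gradient h gh) (L0 : 0 <= Lbar)
  (HL : forall u v, nrm (gh u - gh v) <= Lbar * nrm (u - v))
  (Hp1 : 1 < psi) (Hm0 : 0 < 3 * mu') (Hmm : 3 * mu' < mu)
  (Hmu : mu < psi / 2 + psi * (1 + psi - psi ^+ 2) / (2 * (psi + 1)))
  (Hb : 0 < beta) (Ht0 : 0 < tau 0)
  (Hit : forall k, (0 < k)%N ->
     [/\ z k = ((psi - 1) / psi) *: x k.-1 + psi^-1 *: z k.-1,
         is_prox (tau k.-1) f
           (z k - tau k.-1 *: (K^T *m y k.-1) - tau k.-1 *: gh (x k.-1)) (x k),
         (tau k)%:E = Order.min (tau k.-1)%:E
            (Order.min (divinf (mu * nrm (x k - x k.-1))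
                               (Num.sqrt beta * nrm (K *m x k - K *m x k.-1)))
                       (divinf (mu' * nrm (x k - x k.-1))
                               (nrm (gh (x k) - gh (x k.-1))))),
         is_prox (beta * tau k)^-1 g ((beta * tau k)^-1 *: y k.-1 + K *m x k) (w k)
       & y k = y k.-1 + (beta * tau k) *: (K *m x k - w k)]).

Lemma mu_pos : 0 < mu. Proof. exact: lt_trans Hm0 Hmm. Qed.
Lemma mu'_pos : 0 < mu'. Proof. by move: Hm0; rewrite pmulr_rgt0. Qed.

Lemma tau_facts k : (0 < k)%N ->
  [/\ tau k <= tau k.-1,
      ((tau k)%:E <= divinf (mu * nrm (x k - x k.-1))
                               (Num.sqrt beta * nrm (K *m x k - K *m x k.-1)))%E
    & ((tau k)%:E <= divinf (mu' * nrm (x k - x k.-1))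
                               (nrm (gh (x k) - gh (x k.-1))))%E].
Proof.
move=> k0; have [_ _ E _ _] := Hit k0.
split.
- by rewrite -lee_fin E ge_min lexx.
- by rewrite E ge_min; apply/orP; right; rewrite ge_min lexx.
- by rewrite E ge_min; apply/orP; right; rewrite ge_min lexx orbT.
Qed.

Lemma tau_dec k : tau k.+1 <= tau k.
Proof. by have [] := tau_facts (ltn0Sn k). Qed.

Lemma frobK : exists2 C, 0 <= C & forall v, nrm (K *m v) <= Num.sqrt C * nrm v.
Proof.
have [C C0 HC] := frob K; exists C => // v.
by rewrite /nrm -sqrtrM // ler_wsqrtr.
Qed.

Lemma tau_lb : exists2 c, 0 < c & forall k, c <= tau k.
Proof.
have [C C0 HC] := frobK.
have sb : 0 < Num.sqrt beta by rewrite sqrtr_gt0.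
have sC : 0 <= Num.sqrt C := sqrtr_ge0 _.
pose c1 := mu / (Num.sqrt beta * (Num.sqrt C + 1)).
pose c2 := mu' / (Lbar + 1).
have c10 : 0 < c1 by rewrite divr_gt0 ?mu_pos // mulr_gt0 // ltr_wpDl.
have c20 : 0 < c2 by rewrite divr_gt0 ?mu'_pos // ltr_wpDl.
exists (Num.min (tau 0) (Num.min c1 c2)); first by rewrite !lt_min Ht0 c10 c20.
elim => [|k IH]; first by rewrite ge_min lexx.
have [_ _ E _ _] := Hit (ltn0Sn k); rewrite /= in E.
rewrite -lee_fin E !le_min; apply/andP; split; first by rewrite lee_fin.
apply/andP; split.
- apply: divinf_ge; first by rewrite !lt_min Ht0 c10 c20.
    by rewrite mulr_ge0 ?sqrtr_ge0 ?nrm_ge0.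
  apply: (@le_trans _ _ (c1 * (Num.sqrt beta * nrm (K *m x k.+1 - K *m x k)))).
    by rewrite ler_wpM2r ?mulr_ge0 ?sqrtr_ge0 ?nrm_ge0 // !ge_min lexx orbT.
  rewrite -mulmxBr; set d := x k.+1 - x k.
  have Hd := HC d; have nd := nrm_ge0 d.
  have E1 : c1 * (Num.sqrt beta * nrm (K *m d)) = mu / (Num.sqrt C + 1) * nrm (K *m d).
    by rewrite /c1; field; rewrite gt_eqF ?ltr_wpDl // gt_eqF.
  rewrite E1.
  have H1 : mu / (Num.sqrt C + 1) * nrm (K *m d) <= mu / (Num.sqrt C + 1) * (Num.sqrt C * nrm d).
    by rewrite ler_wpM2l // divr_ge0 ?ltW ?mu_pos // ltr_wpDl.
  apply: le_trans H1 _.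
  have E2 : mu / (Num.sqrt C + 1) * (Num.sqrt C * nrm d) = mu * nrm d * (Num.sqrt C / (Num.sqrt C + 1)).
    by field; rewrite gt_eqF // ltr_wpDl.
  rewrite E2; apply: ler_piMr; first by rewrite mulr_ge0 // ltW ?mu_pos.
  by rewrite ler_pdivrMr ?mul1r ?lerDl // ltr_wpDl.
- apply: divinf_ge; first by rewrite !lt_min Ht0 c10 c20.
    exact: nrm_ge0.
  apply: (@le_trans _ _ (c2 * nrm (gh (x k.+1) - gh (x k)))).
    by rewrite ler_wpM2r ?nrm_ge0 // !ge_min lexx !orbT.
  set d := x k.+1 - x k; have nd := nrm_ge0 d.
  have H1 : c2 * nrm (gh (x k.+1) - gh (x k)) <= c2 * (Lbar * nrm d).
    by rewrite ler_wpM2l // ltW.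
  apply: le_trans H1 _.
  have E2 : c2 * (Lbar * nrm d) = mu' * nrm d * (Lbar / (Lbar + 1)).
    by rewrite /c2; field; rewrite gt_eqF // ltr_wpDl.
  rewrite E2; apply: ler_piMr; first by rewrite mulr_ge0 // ltW ?mu'_pos.
  by rewrite ler_pdivrMr ?mul1r ?lerDl // ltr_wpDl.
Qed.

Lemma tau_pos k : 0 < tau k.
Proof. by have [c c0 Hc] := tau_lb; exact: lt_le_trans c0 (Hc k). Qed.

Lemma tauK k : (0 < k)%N ->
  tau k ^+ 2 * beta * sq (K *m (x k - x k.-1)) <= mu ^+ 2 * sq (x k - x k.-1).
Proof.
move=> k0; have [_ H _] := tau_facts k0.
have := divinf_le (ltW (tau_pos k)) (mulr_ge0 (ltW mu_pos) (nrm_ge0 _))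
  (mulr_ge0 (sqrtr_ge0 _) (nrm_ge0 _)) H.
move/(sq_le_sq (mulr_ge0 (ltW (tau_pos k)) (mulr_ge0 (sqrtr_ge0 _) (nrm_ge0 _)))).
rewrite !exprMn sqr_sqrtr ?(ltW Hb) // !nrm_sq mulmxBr /sq; by rewrite mulrA.
Qed.

Lemma tauH k : (0 < k)%N ->
  tau k ^+ 2 * sq (gh (x k) - gh (x k.-1)) <= mu' ^+ 2 * sq (x k - x k.-1).
Proof.
move=> k0; have [_ _ H] := tau_facts k0.
have := divinf_le (ltW (tau_pos k)) (mulr_ge0 (ltW mu'_pos) (nrm_ge0 _)) (nrm_ge0 _) H.
move/(sq_le_sq (mulr_ge0 (ltW (tau_pos k)) (nrm_ge0 _))).
by rewrite !exprMn !nrm_sq.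
Qed.


Lemma xprox k : (0 < k)%N -> exists Fk : R, f (x k) = Fk%:E /\
  forall u (fu : R), f u = fu%:E ->
    ip (z k - x k) (u - x k) - tau k.-1 * (ip (y k.-1) (K *m u) - ip (y k.-1) (K *m x k))
      - tau k.-1 * (ip (gh (x k.-1)) u - ip (gh (x k.-1)) (x k)) <= tau k.-1 * (fu - Fk).
Proof.
move=> k0; have [_ Hp _ _ _] := Hit k0.
have [Fk [EF HF]] := prox_vi (tau_pos _) Pf Cf Hp.
by exists Fk; split => // u fu /HF; rewrite prox_exp.
Qed.

Lemma ydual k : (0 < k)%N -> exists Gk : R, conj_fun g (y k) = Gk%:E /\
  forall y', ((Gk + ip (w k) (y' - y k))%:E <= conj_fun g y')%E.
Proof.
move=> k0; have [_ _ _ Hp Ey] := Hit k0.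
exact: dual_vi (mulr_gt0 Hb (tau_pos k)) Pg Cg Hp Ey.
Qed.

Lemma sad_dec a b : saddle_point f h K g a b ->
  exists Fa Gb : R, [/\ f a = Fa%:E, conj_fun g b = Gb%:E,
    (forall x' (fx : R), f x' = fx%:E -> Fa + h a + ip (K *m a) b <= fx + h x' + ip (K *m x') b)
  & (forall y' (gy : R), conj_fun g y' = gy%:E -> ip (K *m a) y' - gy <= ip (K *m a) b - Gb)].
Proof.
move=> [fa [gb H]].
have [Fa EFa] := fin_of (Pf.1 a) (fun E => ltac:(by move: fa; rewrite E ltxx)).
have [Gb EGb] := fin_of (@conj_nmo _ _ g b Pg) (fun E => ltac:(by move: gb; rewrite E ltxx)).
exists Fa, Gb; split => //.
- move=> x' fx Ex; have [_ H2] := H x' b; move: H2.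
  by rewrite /lagr EFa EGb Ex -!EFinN -!EFinD lee_fin; lra.
- move=> y' gy Ey; have [H1 _] := H a y'; move: H1.
  by rewrite /lagr EFa EGb Ey -!EFinN -!EFinD lee_fin; lra.
Qed.

Definition cc := psi / (psi - 1).

Definition EB a b k := beta * cc * sq (z k.+1 - a) + sq (y k.-1 - b)
  + beta * mu' * sq (x k - x k.-1).

Definition Dq k := (1 + psi^-1 - tau k / tau k.-1 * psi) * sq (x k.+1 - z k.+1)
  + tau k / tau k.-1 * psi * sq (z k.+1 - x k)
  + (tau k / tau k.-1 * psi - (tau k / tau k.+1) ^+ 2 * mu - 2 * mu') * sq (x k.+1 - x k).

Lemma energy a b k : saddle_point f h K g a b -> (0 < k)%N ->
  EB a b k.+1 + beta * Dq k + (1 - mu) * sq (y k - y k.-1) <= EB a b k.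
Proof.
move=> Hs k0.
have [Fa [Gb [EFa EGb S1 S2]]] := sad_dec Hs.
have [F0 [EF0 HF0]] := xprox k0.
have [F1 [EF1 HF1]] := xprox (ltn0Sn k).
have [G0 [EG0 HG0]] := ydual k0.
have [hz1 _ _ _ _] := Hit (ltn0Sn k).
have [_ _ _ _ Ey0] := Hit k0.
have [hz2 _ _ _ _] := Hit (ltn0Sn k.+1).
have tk := tau_pos k; have tkm := tau_pos k.-1; have tk1 := tau_pos k.+1.
apply: (@core_alg R beta psi (tau k / tau k.-1) (tau k / tau k.+1) mu mu' cc psi^-1
  (tau k) (tau k.-1)
  (sq (x k.+1 - z k.+1)) (sq (z k.+1 - x k)) (sq (x k.+1 - x k)) (sq (y k - y k.-1))
  (sq (z k.+1 - a)) (sq (z k.+2 - a)) (sq (x k.+1 - a)) (sq (y k - b)) (sq (y k.-1 - b))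
  (sq (x k - x k.-1))
  (ip (z k.+1 - x k.+1) (a - x k.+1)) (ip (z k.+1 - x k) (x k.+1 - x k))
  (ip (y k.-1 - y k) (b - y k)) (ip (y k.-1 - y k) (K *m (x k.+1 - x k)))
  (ip (gh (x k) - gh (x k.-1)) (x k - x k.+1))
  Fa F0 F1 Gb G0 (h a) (h (x k))
  (ip (y k) (K *m a)) (ip (y k) (K *m x k.+1)) (ip (y k.-1) (K *m x k.+1))
  (ip (y k.-1) (K *m x k)) (ip (K *m x k) b) (ip (K *m x k) (y k)) (ip (K *m a) b)
  (ip (gh (x k)) a) (ip (gh (x k)) (x k.+1)) (ip (gh (x k.-1)) (x k.+1))
  (ip (gh (x k.-1)) (x k)) (ip (gh (x k)) (x k))).
- exact: Hb.
- exact: tk.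
- by rewrite divfK // gt_eqF.
- by rewrite polar (sqB (z k.+1) (x k.+1)) (sqB a (x k.+1)).
- by rewrite (golden a Hp1 hz2).
- by rewrite polar (sqB (z k.+1) (x k.+1)).
- by rewrite polar (sqB (y k.-1) (y k)) (sqB b (y k)) (sqB (y k.-1) b).
- exact: HF1 a Fa EFa.
- have := HF0 (x k.+1) F1 EF1.
  have -> : z k - x k = psi *: (z k.+1 - x k).
    have p0 : psi != 0 by rewrite gt_eqF // (lt_trans ltr01).
    by rewrite hz1; apply/matrixP => i j; rewrite !mxE /=; field.
  rewrite ipZl => H; apply: ler_wpM2l => //.
  by rewrite mulr_ge0 ?divr_ge0 // ltW.
- have := HG0 b; rewrite EGb lee_fin => H.
  have sg : 0 < beta * tau k by rewrite mulr_gt0.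
  have := ler_wpM2l (ltW sg) H.
  rewrite mulrDr (dual_exp b sg Ey0); lra.
- exact: S1 (x k) F0 EF0.
- by rewrite ipC; exact: S2 (y k) G0 EG0.
- by rewrite -ipBr; exact: grad_ineq Ch Gh a (x k).
- by rewrite mulmxBr !ipBl !ipBr (ipC (y k) (K *m x k)); ring.
- by rewrite !ipBl !ipBr; ring.
- rewrite (sqB (y k)); apply: young_K => //; first exact: mu_pos.
  exact: (tauK (ltn0Sn k)).
- rewrite (sqB (x k.+1)); apply: young_H => //; first exact: mu'_pos.
  exact: (tauH k0).
Qed.

Lemma ev_energy : exists2 eps, 0 < eps & exists N, (0 < N)%N /\
  forall a b, saddle_point f h K g a b -> forall k, (N <= k)%N ->
    EB a b k.+1 + beta * eps * (sq (x k.+1 - z k.+1) + sq (z k.+1 - x k))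
      + (1 - mu) * sq (y k - y k.-1) <= EB a b k.
Proof.
have [Q1 Q2 _] := consts Hp1 Hm0 Hmm Hmu.
set A0 := 1 + psi^-1 - psi in Q1 Q2; set B0 := psi - mu - 2 * mu' in Q1 Q2.
set Phi := (A0 + B0) * (psi + B0) - B0 ^+ 2 in Q2.
set L := 3 * A0 + 3 * B0 + 2 * psi.
pose eps := Num.min ((A0 + B0) / 4) (Phi / (2 * (`|L| + 1))).
have L1 : 0 < `|L| + 1 by rewrite ltr_wpDl.
have e0 : 0 < eps by rewrite lt_min !divr_gt0 // mulr_gt0.
have e1 : eps <= (A0 + B0) / 4 by rewrite ge_min lexx.
have e2 : eps <= Phi / (2 * (`|L| + 1)) by rewrite ge_min lexx orbT.
have QA : 0 < (A0 - eps) + (B0 - eps) by lra.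
have QB : (B0 - eps) ^+ 2 <= ((A0 - eps) + (B0 - eps)) * ((psi - 2 * eps) + (B0 - eps)).
  have -> : ((A0 - eps) + (B0 - eps)) * ((psi - 2 * eps) + (B0 - eps))
    = (B0 - eps) ^+ 2 + (Phi - eps * L + 5 * eps ^+ 2) by rewrite /Phi /L; ring.
  have h1 : eps * L <= eps * `|L| by rewrite ler_wpM2l ?ler_norm // ltW.
  have h2 : eps * `|L| <= Phi / 2.
    have : eps * (2 * (`|L| + 1)) <= Phi by rewrite -ler_pdivlMr // mulr_gt0.
    have := normr_ge0 L; nra.
  have := sqr_ge0 eps; nra.
have ps0 : 0 < psi + mu by rewrite addr_gt0 ?mu_pos // (lt_trans ltr01).
pose eta := Num.min 1 (eps / (psi + mu)).
have et0 : 0 < eta by rewrite lt_min ltr01 divr_gt0.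
have et1 : eta <= 1 by rewrite ge_min lexx.
have et2 : eta * (psi + mu) <= eps.
  have : eta <= eps / (psi + mu) by rewrite ge_min lexx orbT.
  by rewrite ler_pdivlMr.
have et3 : psi * eta <= eps.
  have := mu_pos; nra.
have [c c0 Hc] := tau_lb.
have ec : 0 < c * eta / 3 by rewrite divr_gt0 // mulr_gt0.
have [M [_ HM]] := ninc_ev (N0 := 0%N) (fun k _ => tau_dec k) Hc ec.
exists eps => //; exists M.+1; split => // a b Hs k Nk.
have k0 : (0 < k)%N by exact: leq_trans (ltn0Sn M) Nk.
have Mk : (M <= k.-1)%N by rewrite -ltnS prednK.
have tM1 : tau k.-1 <= tau M := ninc_le (fun k _ => tau_dec k) (leq0n M) Mk.
have tM2 : tau k <= tau M := ninc_le (fun k _ => tau_dec k) (leq0n M) (leq_trans (leqnSn M) Nk).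
have HMk := HM k (leq_trans (leqnSn M) Nk).
have HMk1 := HM k.+1 (leq_trans (leqnSn M) (leq_trans Nk (leqnSn k))).
have tk := tau_pos k; have tkm := tau_pos k.-1; have tk1 := tau_pos k.+1.
have ckm := Hc k.-1; have ck1 := Hc k.+1.
have dkm : tau k <= tau k.-1 by have := tau_dec k.-1; rewrite prednK.
have r1 : tau k / tau k.-1 <= 1 by rewrite ler_pdivrMr // mul1r.
have r2 : 1 - eta <= tau k / tau k.-1.
  rewrite ler_pdivlMr //.
  have : c * eta <= tau k.-1 * eta by rewrite ler_wpM2r // ltW.
  nra.
have r3 : (tau k / tau k.+1) ^+ 2 <= 1 + eta.
  have hr : tau k / tau k.+1 <= 1 + eta / 3.
    rewrite ler_pdivrMr //.
    have : c * eta <= tau k.+1 * eta by rewrite ler_wpM2r // ltW.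
    nra.
  have hr0 : 0 <= tau k / tau k.+1 by rewrite divr_ge0 // ltW.
  apply: le_trans (sq_le_sq hr0 hr) _; nra.
have HD := Dq_lb (x k.+1 - z k.+1) (z k.+1 - x k) Hp1 mu_pos (ltW et0) et3 et2 r1 r2 r3 QA QB.
have Euv : (x k.+1 - z k.+1) + (z k.+1 - x k) = x k.+1 - x k by rewrite addrA subrK.
rewrite Euv in HD.
have HE := energy Hs k0.
have HDb := ler_wpM2l (ltW Hb) HD.
rewrite /Dq in HE; lra.
Qed.

Lemma cc_pos : 0 < cc.
Proof. by rewrite /cc divr_gt0 ?subr_gt0 // (lt_trans ltr01). Qed.

Lemma EB_ge0 a b k : 0 <= EB a b k.
Proof.
rewrite /EB; have := cc_pos; have := mu'_pos.
have := sq_ge0 (z k.+1 - a); have := sq_ge0 (y k.-1 - b); have := sq_ge0 (x k - x k.-1).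
move=> h1 h2 h3 h4 h5.
have := mulr_ge0 (mulr_ge0 (ltW Hb) (ltW h5)) h3.
have := mulr_ge0 (mulr_ge0 (ltW Hb) (ltW h4)) h1.
lra.
Qed.

Lemma mu_lt1 : mu < 1.
Proof. by have [] := consts Hp1 Hm0 Hmm Hmu. Qed.

Lemma conv_main : (exists xs ys, saddle_point f h K g xs ys) ->
  exists xs ys, saddle_point f h K g xs ys /\
    (fun k => nrm (x k - xs)) @ \oo --> (0 : R) /\
    (fun k => nrm (y k - ys)) @ \oo --> (0 : R).
Proof.
move=> [a [b Hs]].
have [eps e0 [N [N0 HE]]] := ev_energy.
have be0 : 0 < beta * eps by rewrite mulr_gt0.
have m1 : 0 < 1 - mu by rewrite subr_gt0 mu_lt1.
have HEd : forall a' b', saddle_point f h K g a' b' -> forall k, (N <= k)%N ->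
    EB a' b' k.+1 <= EB a' b' k.
  move=> a' b' Hs' k Nk; have := HE a' b' Hs' k Nk.
  have := sq_ge0 (x k.+1 - z k.+1); have := sq_ge0 (z k.+1 - x k).
  have := sq_ge0 (y k - y k.-1) => h1 h2 h3.
  have := mulr_ge0 (ltW be0) (addr_ge0 h3 h2); have := mulr_ge0 (ltW m1) h1.
  lra.
pose D k := beta * eps * (sq (x k.+1 - z k.+1) + sq (z k.+1 - x k))
      + (1 - mu) * sq (y k - y k.-1).
have D0 : forall k, 0 <= D k.
  move=> k; rewrite /D.
  have := mulr_ge0 (ltW be0) (addr_ge0 (sq_ge0 (x k.+1 - z k.+1)) (sq_ge0 (z k.+1 - x k))).
  have := mulr_ge0 (ltW m1) (sq_ge0 (y k - y k.-1)); lra.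
have HE' : forall k, (N <= k)%N -> EB a b k.+1 + D k <= EB a b k.
  by move=> k Nk; rewrite /D addrA; exact: HE a b Hs k Nk.
have rD : rcv D 0 := dec_to0 (EB_ge0 a b) D0 HE'.
have rp : rcv (fun k => sq (x k.+1 - z k.+1)) 0.
  have := rcvZ (beta * eps)^-1 rD; rewrite mulr0 => H.
  apply: (rcv0_le (N0 := 0%N)) H => k _; rewrite ger0_norm ?sq_ge0 //.
  rewrite ler_pdivlMl // /D; have := sq_ge0 (z k.+1 - x k); have := sq_ge0 (y k - y k.-1).
  move=> h1 h2; have := mulr_ge0 (ltW m1) h1; have := mulr_ge0 (ltW be0) h2; lra.
have rq : rcv (fun k => sq (z k.+1 - x k)) 0.
  have := rcvZ (beta * eps)^-1 rD; rewrite mulr0 => H.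
  apply: (rcv0_le (N0 := 0%N)) H => k _; rewrite ger0_norm ?sq_ge0 //.
  rewrite ler_pdivlMl // /D; have := sq_ge0 (x k.+1 - z k.+1); have := sq_ge0 (y k - y k.-1).
  move=> h1 h2; have := mulr_ge0 (ltW m1) h1; have := mulr_ge0 (ltW be0) h2; lra.
have rs : rcv (fun k => sq (y k - y k.-1)) 0.
  have := rcvZ (1 - mu)^-1 rD; rewrite mulr0 => H.
  apply: (rcv0_le (N0 := 0%N)) H => k _; rewrite ger0_norm ?sq_ge0 //.
  rewrite ler_pdivlMl // /D.
  have := mulr_ge0 (ltW be0) (addr_ge0 (sq_ge0 (x k.+1 - z k.+1)) (sq_ge0 (z k.+1 - x k))).
  lra.
have rr : rcv (fun k => sq (x k.+1 - x k)) 0.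
  have := rcvD (rcvZ 2 rp) (rcvZ 2 rq); rewrite mulr0 addr0 => H.
  apply: (rcv0_le (N0 := 0%N)) H => k _; rewrite ger0_norm ?sq_ge0 //.
  have -> : x k.+1 - x k = (x k.+1 - z k.+1) + (z k.+1 - x k) by rewrite addrA subrK.
  exact: sqD_le.
set EN := EB a b N.
have EBle : forall k, (N <= k)%N -> EB a b k <= EN.
  by move=> k Nk; rewrite /EN; exact: (ninc_le (HEd a b Hs) (leqnn N) Nk).
have bcc : 0 < beta * cc by rewrite mulr_gt0 ?cc_pos.
have Bz : forall k, (N <= k)%N -> sq (z k.+1 - a) <= EN / (beta * cc).
  move=> k Nk; rewrite ler_pdivlMr // mulrC; apply: le_trans (EBle k Nk).
  rewrite /EB; have := sq_ge0 (y k.-1 - b).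
  have := mulr_ge0 (mulr_ge0 (ltW Hb) (ltW mu'_pos)) (sq_ge0 (x k - x k.-1)); lra.
have Bq : forall k, (N <= k)%N -> sq (z k.+1 - x k) <= EN / (beta * eps).
  move=> k Nk; rewrite ler_pdivlMr // mulrC; apply: le_trans (EBle k Nk).
  have := HE' k Nk; have := EB_ge0 a b k.+1; rewrite /D.
  have := mulr_ge0 (ltW be0) (sq_ge0 (x k.+1 - z k.+1)).
  have := mulr_ge0 (ltW m1) (sq_ge0 (y k - y k.-1)); lra.
have By : forall k, (N <= k)%N -> sq (y k.-1 - b) <= EN.
  move=> k Nk; apply: le_trans (EBle k Nk); rewrite /EB.
  have := mulr_ge0 (ltW bcc) (sq_ge0 (z k.+1 - a)).
  have := mulr_ge0 (mulr_ge0 (ltW Hb) (ltW mu'_pos)) (sq_ge0 (x k - x k.-1)); lra.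
have BX : forall j, sq (x (j + N)%N) <= 2 * (2 * (EN / (beta * eps)) + 2 * (EN / (beta * cc))) + 2 * sq a.
  move=> j; have Nk : (N <= j + N)%N by rewrite leq_addl.
  have E1 : x (j + N)%N = (x (j + N)%N - a) + a by rewrite subrK.
  rewrite E1; apply: le_trans (sqD_le _ _) _.
  rewrite lerD2r ler_pM2l //.
  have E2 : x (j + N)%N - a = (x (j + N)%N - z (j + N).+1) + (z (j + N).+1 - a) by rewrite addrA subrK.
  rewrite E2; apply: le_trans (sqD_le _ _) _.
  rewrite sqB; have := Bq _ Nk; have := Bz _ Nk; lra.
have BY : forall j, sq (y (j + N)%N) <= 2 * EN + 2 * sq b.
  move=> j; have Nk : (N <= (j + N).+1)%N by rewrite ltnW // ltnS leq_addl.
  have E1 : y (j + N)%N = (y (j + N)%N - b) + b by rewrite subrK.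
  rewrite E1; apply: le_trans (sqD_le _ _) _.
  have := By _ Nk; rewrite /=; lra.
have [xb [phi1 [Hphi1 Hx1]]] := BWsub BX.
have [yb [phi2 [Hphi2 Hy2]]] := BWsub (fun j => BY (phi1 j)).
pose nu j := (phi1 (phi2 j) + N)%N.
have nuj : forall j, (j <= nu j)%N.
  move=> j; apply: leq_trans (Hphi2 j) _; apply: leq_trans (Hphi1 _) _; exact: leq_addr.
have nuN : forall j, (N <= nu j)%N by move=> j; exact: leq_addl.
have nu0 : forall j, (0 < nu j)%N by move=> j; exact: leq_trans N0 (nuN j).
have nu1 : forall j, (j <= (nu j).-1)%N.
  move=> j; rewrite -ltnS prednK //; apply: (@leq_trans (phi1 (phi2 j)).+1).
    by rewrite ltnS; exact: leq_trans (Hphi2 j) (Hphi1 _).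
  by rewrite /nu -addn1 leq_add2l.
have Vx : vcv (fun j => x (nu j)) xb := rcv_sub Hphi2 Hx1.
have Vy : vcv (fun j => y (nu j)) yb := Hy2.
have Vxm : vcv (fun j => x (nu j).-1) xb.
  apply: vcv_close Vx _; apply: rcv_ext (rcv_sub nu1 rr) => j.
  by rewrite prednK // sqB.
have Vym : vcv (fun j => y (nu j).-1) yb.
  apply: vcv_close Vy _; apply: rcv_ext (rcv_sub nuj rs) => j.
  by rewrite sqB.
have Vzx : vcv (fun j => z (nu j) - x (nu j)) 0.
  apply: rcv_ext (rcv_sub nu1 rp) => j.
  by rewrite prednK // subr0 sqB.
have Vz1 : vcv (fun j => z (nu j).+1) xb.
  apply: vcv_close Vx _; exact: rcv_sub nuj rq.
have [CK CK0 HCK] := frob K.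
have VKx : vcv (fun j => K *m x (nu j)) (K *m xb).
  apply: (vcv_le (C := CK)) Vx => j; rewrite -mulmxBr; exact: HCK.
have Vg : vcv (fun j => gh (x (nu j).-1)) (gh xb).
  apply: (vcv_le (C := Lbar ^+ 2)) Vxm => j.
  rewrite /sq -!nrm_sq -exprMn; apply: sq_le_sq; [exact: nrm_ge0 | exact: HL].
have [c c0 Hc] := tau_lb.
have Vw : vcv (fun j => w (nu j)) (K *m xb).
  apply: vcv_close VKx _.
  have := rcvZ ((beta * c) ^+ 2)^-1 (rcv_sub nuj rs); rewrite mulr0 => H.
  apply: (rcv0_le (N0 := 0%N)) H => j _; rewrite ger0_norm ?sq_ge0 //.
  have [_ _ _ _ Ey] := Hit (nu0 j).
  set k := nu j in Ey *.
  have tk := tau_pos k; have ck := Hc k.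
  have bt : 0 < beta * tau k by rewrite mulr_gt0.
  have -> : w k - K *m x k = (beta * tau k)^-1 *: (y k.-1 - y k).
    rewrite Ey; apply/matrixP => i l; rewrite !mxE; field.
    by rewrite ?mulf_neq0 ?gt_eqF.
  rewrite /sq ipZl ipZr mulrA -expr2 exprVn -/(sq (y k.-1 - y k)) (sqB (y k.-1)) /sq.
  apply: ler_wpM2r; first exact: ip_ge0.
  rewrite lef_pV2 ?posrE ?exprn_gt0 ?mulr_gt0 //.
  by apply: sq_le_sq; [rewrite mulr_ge0 // ltW | rewrite ler_wpM2l // ltW].
(* the cluster point is a saddle point *)
have Hfx : forall x' (fx : R), f x' = fx%:E ->
    (f xb <= (fx - 0 + (ip yb (K *m x') - ip yb (K *m xb))
              + (ip (gh xb) x' - ip (gh xb) xb))%:E)%E.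
  move=> x' fx Ex.
  apply: (Lf (u := fun j => x (nu j))
    (a := fun j => fx - (tau (nu j).-1)^-1 * ip (z (nu j) - x (nu j)) (x' - x (nu j))
       + (ip (y (nu j).-1) (K *m x') - ip (y (nu j).-1) (K *m x (nu j)))
       + (ip (gh (x (nu j).-1)) x' - ip (gh (x (nu j).-1)) (x (nu j))))).
  - exact: vcv_nrm Vx.
  - apply: rcv_cvg; apply: rcvD; first apply: rcvD.
    + apply: rcvD (rcv_const _) _; apply: rcvN.
      apply: (rcv_bdd0 (B := c^-1)).
        move=> j; have tj := tau_pos (nu j).-1.
        rewrite ger0_norm; last by rewrite invr_ge0 ltW.
        by rewrite lef_pV2 ?posrE.
      have := ip_cont Vzx (vcvB (vcv_const x') Vx); rewrite ip0l; exact.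
    + exact: rcvD (ip_cont Vym (vcv_const _)) (rcvN (ip_cont Vym VKx)).
    + exact: rcvD (ip_cont Vg (vcv_const _)) (rcvN (ip_cont Vg Vx)).
  - move=> j; have [F [EF HF]] := xprox (nu0 j); rewrite EF lee_fin.
    have := HF x' fx Ex; set k := nu j; have tk := tau_pos k.-1.
    set I := ip (z k - x k) (x' - x k).
    set A := ip (y k.-1) (K *m x') - ip (y k.-1) (K *m x k).
    set B := ip (gh (x k.-1)) x' - ip (gh (x k.-1)) (x k) => H.
    rewrite -(ler_pM2l tk).
    have -> : tau k.-1 * (fx - (tau k.-1)^-1 * I + A + B) = tau k.-1 * fx - I + tau k.-1 * A + tau k.-1 * B.
      by field; rewrite gt_eqF.
    lra.
have Hgy : forall y' (gy : R), conj_fun g y' = gy%:E ->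
    (conj_fun g yb <= (gy - ip (K *m xb) (y' - yb))%:E)%E.
  move=> y' gy Ey.
  apply: (conj_lsc Pg Vy (a := fun j => gy - ip (w (nu j)) (y' - y (nu j)))).
    exact: rcvD (rcv_const _) (rcvN (ip_cont Vw (vcvB (vcv_const y') Vy))).
  move=> j; have [G [EG HG]] := ydual (nu0 j); rewrite EG lee_fin.
  have := HG y'; rewrite Ey lee_fin; lra.
have [Fa [Gb [EFa EGb _ _]]] := sad_dec Hs.
have [Fb EFb] : exists Fb, f xb = Fb%:E.
  apply: fin_of (Pf.1 xb) _ => E; have := Hfx a Fa EFa; rewrite E leye_eq.
  by [].
have [Gbb EGbb] : exists G, conj_fun g yb = G%:E.
  apply: fin_of (@conj_nmo _ _ g yb Pg) _ => E; have := Hgy b Gb EGb; rewrite E leye_eq.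
  by [].
have Hsad : saddle_point f h K g xb yb.
  split; first by rewrite EFb ltry.
  split; first by rewrite EGbb ltry.
  move=> x' y'; split.
  - rewrite /lagr EFb EGbb.
    case Egy : (conj_fun g y') => [gy | | ].
    + rewrite -!EFinN -!EFinD lee_fin.
      have := Hgy y' gy Egy; rewrite EGbb lee_fin ipBr; lra.
    + by rewrite /= leNye.
    + by have := @conj_nmo _ _ g y' Pg; rewrite Egy.
  - rewrite /lagr EFb EGbb.
    case Efx : (f x') => [fx | | ].
    + rewrite -!EFinN -!EFinD lee_fin.
      have := Hfx x' fx Efx; rewrite EFb lee_fin.
      have := grad_ineq Ch Gh x' xb; rewrite ipBr (ipC (K *m xb)) (ipC (K *m x')); lra.
    + by rewrite /= leey.
    + by have := Pf.1 x'; rewrite Efx.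
(* convergence of the whole sequence *)
have HEd' := HEd xb yb Hsad.
have rEnu : rcv (fun j => EB xb yb (nu j)) 0.
  have H3 : rcv (fun j => sq (x (nu j) - x (nu j).-1)) 0.
    by apply: rcv_ext (rcv_sub nu1 rr) => j; rewrite prednK.
  have := rcvD (rcvD (rcvZ (beta * cc) Vz1) Vym) (rcvZ (beta * mu') H3).
  by rewrite !mulr0 !addr0.
have rE : rcv (EB xb yb) 0.
  move=> e e1; have [J HJ] := rEnu e e1; exists (nu J) => k Hk.
  have := HJ J (leqnn J); rewrite !subr0 !ger0_norm ?EB_ge0 //.
  apply: le_lt_trans; exact: (ninc_le HEd' (nuN J) Hk).
have Vzall : vcv (fun k => z k.+1) xb.
  have := rcvZ (beta * cc)^-1 rE; rewrite mulr0 => H.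
  apply: (rcv0_le (N0 := 0%N)) H => k _; rewrite ger0_norm ?sq_ge0 //.
  rewrite ler_pdivlMl // /EB.
  have := sq_ge0 (y k.-1 - yb).
  have := mulr_ge0 (mulr_ge0 (ltW Hb) (ltW mu'_pos)) (sq_ge0 (x k - x k.-1)); lra.
have Vxall : vcv x xb.
  by apply: vcv_close Vzall _; apply: rcv_ext rq => k; rewrite sqB.
have Vymall : vcv (fun k => y k.-1) yb.
  apply: (rcv0_le (N0 := 0%N)) rE => k _; rewrite ger0_norm ?sq_ge0 //.
  rewrite /EB; have := mulr_ge0 (ltW bcc) (sq_ge0 (z k.+1 - xb)).
  have := mulr_ge0 (mulr_ge0 (ltW Hb) (ltW mu'_pos)) (sq_ge0 (x k - x k.-1)); lra.
have Vyall : vcv y yb.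
  by apply: rcv_ext (rcv_shift 1 Vymall) => k; rewrite addn1.
exists xb, yb; split => //; split; exact: vcv_nrm.
Qed.

End Main.


Unset Implicit Arguments.

Theorem theorem3p2 (R : realType) (n m : nat) (K : 'M[R]_(m, n))
  (f : 'cV[R]_n -> \bar R) (g : 'cV[R]_m -> \bar R)
  (h : 'cV[R]_n -> R) (gh : 'cV[R]_n -> 'cV[R]_n) (Lbar : R)
  (psi mu mu' beta : R)
  (z x : nat -> 'cV[R]_n) (w y : nat -> 'cV[R]_m) (tau : nat -> R) :
  eproper f -> econvex f -> elsc f ->
  eproper g -> econvex g -> elsc g ->
  rconvex h -> is_gradient h gh -> 0 <= Lbar ->
  (forall u v, nrm (gh u - gh v) <= Lbar * nrm (u - v)) ->
  (exists xs ys, saddle_point f h K g xs ys) ->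
  rel_int [set K *m u - v | u in edom f & v in edom g] 0 ->
  1 < psi -> psi < 1 + Num.sqrt 3 ->
  0 < 3 * mu' -> 3 * mu' < mu ->
  mu < psi / 2 + psi * (1 + psi - psi ^+ 2) / (2 * (psi + 1)) ->
  0 < beta -> 0 < tau 0 ->
  z 0 = x 0 ->
  (forall k, (0 < k)%N ->
     [/\ z k = ((psi - 1) / psi) *: x k.-1 + psi^-1 *: z k.-1,
         is_prox (tau k.-1) f
           (z k - tau k.-1 *: (K^T *m y k.-1) - tau k.-1 *: gh (x k.-1)) (x k),
         (tau k)%:E = Order.min (tau k.-1)%:E
            (Order.min (divinf (mu * nrm (x k - x k.-1))
                               (Num.sqrt beta * nrm (K *m x k - K *m x k.-1)))
                       (divinf (mu' * nrm (x k - x k.-1))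
                               (nrm (gh (x k) - gh (x k.-1))))),
         is_prox (beta * tau k)^-1 g ((beta * tau k)^-1 *: y k.-1 + K *m x k) (w k)
       & y k = y k.-1 + (beta * tau k) *: (K *m x k - w k)]) ->
  exists xs ys, saddle_point f h K g xs ys /\
    (fun k => nrm (x k - xs)) @ \oo --> (0 : R) /\
    (fun k => nrm (y k - ys)) @ \oo --> (0 : R).
Proof.
move=> Pf Cf Lf Pg Cg Lg Ch Gh L0 HL Hsad Hri Hp1 Hp2 Hm0 Hmm Hmu Hb Ht0 Hz0 Hit.
exact: (conv_main Pf Cf Lf Pg Cg Ch Gh L0 HL Hp1 Hm0 Hmm Hmu Hb Ht0 Hit Hsad).
Qed.
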